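(* Let $c\ge 1$ and $k\ge 1$ be integers and let $n$ satisfy $c+1\le n\le ck+1$. Consider the equivalence relation on $S_n$ generated by the replacement partition of $S_{c+1}$ whose only nontrivial part is $\{x\in S_{c+1}: x_1=1\}$. Then every $k$-squished permutation $w\in S_n$ is equivalent to the identity permutation.
   Context: Permutations are written in one-line notation as words. The order permutation (standardization) of a word $u$ of distinct positive integers of length $\ell$ is the unique $\pi\in S_\ell$ with $\pi_i<\pi_j$ iff $u_i<u_j$. The equivalence is generated by declaring $\phi\equiv\psi$ whenever $\phi=aub$ and $\psi=avb$ for words $a,b,u,v$ with $u,v$ of length $c+1$ whose order permutations both begin with $1$. A permutation of $S_n$ is $k$-squished if for each $j\le k$, the letter $j$ occurs among the first $c(j-1)+1$ positions. *)

(* Defs.v *)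
From mathcomp Require Import all_boot.
From Stdlib Require Import Relations.
Set Implicit Arguments. Unset Strict Implicit. Unset Printing Implicit Defensive.

Definition is_perm (n : nat) (w : seq nat) : Prop := perm_eq w (iota 1 n).

(* Order permutation (standardization) of a word of distinct letters:
   the i-th letter becomes 1 + #{letters smaller than it}. *)
Definition std (u : seq nat) : seq nat :=
  map (fun x => (count (fun y => y < x) u).+1) u.

Definition std_begins_1 (u : seq nat) : Prop := head 0 (std u) = 1.

Definition repl_step (c n : nat) (phi psi : seq nat) : Prop :=
  is_perm n phi /\ is_perm n psi /\
  exists a b u v : seq nat,
    phi = a ++ u ++ b /\ psi = a ++ v ++ b /\
    size u = c.+1 /\ size v = c.+1 /\
    std_begins_1 u /\ std_begins_1 v.

Definition repl_equiv (c n : nat) : relation (seq nat) :=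
  clos_refl_sym_trans (seq nat) (repl_step c n).

Definition squished (c k : nat) (w : seq nat) : Prop :=
  forall j, 1 <= j <= k -> j \in take (c * (j - 1)).+1 w.

(* Main.v *)
Require Import Defs.
From mathcomp Require Import all_boot.
From Stdlib Require Import Relations.
From mathcomp Require Import zify.

Definition stp (c : nat) (u v : seq nat) : Prop :=
  exists a b s t, u = a ++ s ++ b /\ v = a ++ t ++ b /\ size s = c.+1 /\
    perm_eq s t /\ head 0 s = head 0 t /\ all (fun y => head 0 s <= y) s.

Definition EE c := clos_refl_sym_trans (seq nat) (stp c).

Lemma EE_ctx c a b u v : EE c u v -> EE c (a ++ u ++ b) (a ++ v ++ b).
Proof.
elim => {u v} [u v [a' [b' [s [t [-> [-> H]]]]]] | u | u v _ IH | u v w _ IH1 _ IH2].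
- apply: rst_step; exists (a ++ a'), (b' ++ b), s, t; rewrite -!catA; by [].
- exact: rst_refl.
- exact: rst_sym.
- exact: rst_trans IH1 IH2.
Qed.

Lemma EE_map c f u v : {homo f : x y / x <= y} -> EE c u v ->
  EE c (map f u) (map f v).
Proof.
move=> hf.
elim => {u v} [u v [a [b [s [t [-> [-> [Hs [Hp [Hh Ha]]]]]]]]] | u | u v _ IH | u v w _ IH1 _ IH2].
- apply: rst_step; exists (map f a), (map f b), (map f s), (map f t).
  rewrite !map_cat size_map perm_map //; do 3 split => //.
  case: s Hs Hp Hh Ha => [//|y s] _ Hp; have := perm_size Hp.
  case: t Hp => [//|y' t] Hp _ /= -> Ha; split => //.
  rewrite leqnn /= all_map; split => //; apply/allP => z Hz /=; apply: hf.
  by move/andP: Ha => [_ /allP]; apply.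
- exact: rst_refl.
- exact: rst_sym.
- exact: rst_trans IH1 IH2.
Qed.

Lemma EE_perm n c u v : EE c u v -> (is_perm n u <-> is_perm n v).
Proof.
elim => {u v} [u v [a [b [s [t [-> [-> [Hs [Hp [Hh Ha]]]]]]]]] | u | u v _ IH | u v w _ IH1 _ IH2].
- have /permPl P : perm_eq (a ++ s ++ b) (a ++ t ++ b).
    by rewrite perm_cat2l perm_cat2r.
  by rewrite /is_perm P.
- by [].
- by split => H; apply/IH.
- by split => H; [apply/IH2/IH1 | apply/IH1/IH2].
Qed.

Lemma EE_repl n c u v : EE c u v -> is_perm n u -> repl_equiv c n u v.
Proof.
elim => {u v} [u v Hst | u | u v Huv IH | u v w Huv IH1 Hvw IH2] Hu.
- apply: rst_step; split => //; split.
    have HE : EE c u v by apply: rst_step.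
    exact: (proj1 (EE_perm n _ _ _ HE) Hu).
  move: Hst => [a [b [s [t [-> [-> [Hs [Hp [Hh Ha]]]]]]]]].
  have Ht : size t = c.+1 by rewrite -(perm_size Hp).
  exists a, b, s, t; do 4 split => //.
  case: s Hs Hp Hh Ha => [//|y s] _ Hp.
  case: t Ht Hp => [//|y' t] _ Hp /= Hh Ha.
  have Ha' : all (fun z => y <= z) (y' :: t) by rewrite -(perm_all _ Hp).
  rewrite /std_begins_1 /std /= !ltnn !add0n; split; congr S;
  rewrite (@eq_in_count _ _ pred0) ?count_pred0 // => z Hz /=; apply/negbTE; rewrite -leqNgt.
  + by move/andP: Ha => [_ /allP]; apply.
  + by rewrite -Hh; move/andP: Ha' => [_ /allP]; apply.
- exact: rst_refl.
- apply: rst_sym; apply: IH; exact: (proj2 (EE_perm n _ _ _ Huv) Hu).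
- apply: rst_trans (IH1 Hu) (IH2 _); exact: (proj1 (EE_perm n _ _ _ Huv) Hu).
Qed.

Definition sqq c n w := forall j, 0 < j -> (c * (j - 1)).+1 < n ->
  j \in take (c * (j - 1)).+1 w.

Definition fx (x l : nat) := if l < x then l else l.+1.
Definition gx (x l : nat) := if l < x then l else l.-1.

Lemma fx_homo x : {homo fx x : a b / a <= b}.
Proof. move=> a b H; rewrite /fx; case: ifP; case: ifP; lia. Qed.

Lemma map_fx_lo x a m : a + m <= x -> map (fx x) (iota a m) = iota a m.
Proof.
move=> H; rewrite -{2}(map_id (iota a m)); apply/eq_in_map => l.
rewrite mem_iota /fx => /andP[_ Hl]; rewrite ifT //; lia.
Qed.

Lemma map_fx_hi x a m : x <= a -> map (fx x) (iota a m) = iota a.+1 m.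
Proof.
move=> H; rewrite -add1n iotaDl; apply/eq_in_map => l.
rewrite mem_iota /fx => /andP[Hl _]; rewrite ifF; first by rewrite add1n.
apply/negbTE; rewrite -leqNgt; lia.
Qed.

Lemma iota_app a m1 m2 b : b = a + m1 -> iota a (m1 + m2) = iota a m1 ++ iota b m2.
Proof. by move->; exact: iotaD. Qed.

Lemma index_iota1 m j : 0 < j <= m -> index j (iota 1 m) = j.-1.
Proof.
move=> /andP[H1 H2].
have E : nth 0 (iota 1 m) j.-1 = j by rewrite nth_iota; lia.
by rewrite -{1}E index_uniq ?iota_uniq // size_iota; lia.
Qed.

Lemma take_first m t j r : 0 < j <= m -> j <= t -> j \in take t (iota 1 m ++ r).
Proof.
move=> Hj Ht.
have Hm : j \in iota 1 m by rewrite mem_iota; lia.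
rewrite in_take ?mem_cat ?Hm // index_cat Hm index_iota1 //; lia.
Qed.

Lemma win c a b y s t : size s = c -> perm_eq s t -> all (fun z => y <= z) s ->
  EE c (a ++ y :: s ++ b) (a ++ y :: t ++ b).
Proof.
move=> Hs Hp Ha; apply: rst_step; exists a, b, (y :: s), (y :: t).
by rewrite /= Hs perm_cons Hp leqnn Ha.
Qed.

Lemma sq_help c n x M R : 0 < c -> 2 <= x -> n.+1 <= (c * (x - 1)).+1 ->
  (x - 2) + size M = n - c -> c < n -> (x - 1) \notin M ->
  sqq c n (iota 1 (x - 2) ++ M ++ (x - 1) :: R).
Proof.
move=> c0 x2 H HM cn HxM j j0 Hj.
case: (ltnP j (x - 1)) => Hjx.
  have := leq_pmull (j - 1) c0.
  by move=> Hc; apply: take_first; lia.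
case: (ltnP (x - 1) j) => Hjx'.
  exfalso; have : c * (x - 1) <= c * (j - 1) by apply: leq_mul => //; lia.
  lia.
have -> : j = x - 1 by lia.
have Hn1 : (x - 1) \notin iota 1 (x - 2) by rewrite mem_iota; lia.
rewrite in_take; last by rewrite !mem_cat in_cons eqxx !orbT.
rewrite index_cat (negbTE Hn1) index_cat (negbTE HxM) /= eqxx size_iota addn0.
have -> : x - 1 - 1 = x - 2 by lia.
have : c * (x - 1) = c * (x - 2) + c.
  by rewrite -[in LHS](_ : (x - 2).+1 = x - 1) ?mulnS 1?addnC //; lia.
rewrite HM; move: H; set A := c * (x - 1); set B := c * (x - 2); lia.
Qed.

Lemma main c : 0 < c -> forall n (w : seq nat), c < n -> is_perm n w -> sqq c n w ->
  EE c w (iota 1 n).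
Proof.
move=> c0; elim=> [//|n IH] w Hn Hw Hsq.
have Hsz : size w = n.+1 by rewrite (perm_size Hw) size_iota.
have Hmem : forall z, z \in w -> 0 < z <= n.+1.
  by move=> z; rewrite (perm_mem Hw) mem_iota; lia.
have Hu : uniq w by rewrite (perm_uniq Hw) iota_uniq.
case: (ltnP c n) => Hcn; last first.
  have Ecn : n = c by lia.
  have H1 : 1 \in take 1 w by have := Hsq 1 isT; rewrite subnn muln0; apply; lia.
  case: w Hw Hsz Hmem Hu Hsq H1 => [//|y w'] Hw Hsz Hmem Hu Hsq H1.
  have Ey : y = 1 by move: H1; rewrite /= take0 inE => /eqP.
  subst y; apply: rst_step; exists [::], [::], (1 :: w'), (iota 1 n.+1).
  split; first by rewrite cats0. split; first by rewrite cats0.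
  split; first by rewrite Hsz Ecn. split; first exact: Hw. split; first by [].
  by apply/allP => z Hz /=; have := Hmem z Hz; lia.
case/lastP: w Hw Hsz Hmem Hu Hsq => [//|U x] Hw Hsz Hmem Hu Hsq.
rewrite size_rcons in Hsz; move: Hsz => /eqP; rewrite eqSS => /eqP HsU.
rewrite rcons_uniq in Hu; move/andP: Hu => [HxU HuU].
have Hx : 0 < x <= n.+1 by apply: Hmem; rewrite mem_rcons mem_head.
have HmU : forall z, z \in U -> 0 < z <= n.+1.
  by move=> z Hz; apply: Hmem; rewrite mem_rcons in_cons Hz orbT.
have H : n.+1 <= (c * (x - 1)).+1.
  rewrite leqNgt; apply/negP => Hlt.
  have := Hsq x (proj1 (andP Hx)) Hlt.
  rewrite -cats1 takel_cat; last by rewrite HsU; lia.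
  by move/mem_take; rewrite (negbTE HxU).
have fg : forall l, l \in U -> fx x (gx x l) = l.
  move=> l Hl; have Hlx : l != x by apply: contraNneq HxU => <-.
  have := HmU l Hl; rewrite /fx /gx.
  case: (ltnP l x) => Hl1; first by rewrite Hl1.
  have Hl2 : x < l by rewrite ltn_neqAle eq_sym Hlx Hl1.
  move=> Hr; rewrite ifF; first lia.
  by apply/negbTE; rewrite -leqNgt; lia.
set U0 := map (gx x) U.
have HfU : map (fx x) U0 = U by rewrite -map_comp; apply: map_id_in => l Hl /=; apply: fg.
have HU0 : is_perm n U0.
  have Hun : uniq U0.
    rewrite map_inj_in_uniq // => a b Ha Hb E.
    by rewrite -(fg a Ha) -(fg b Hb) E.
  have Hsub : {subset U0 <= iota 1 n}.
    move=> z /mapP [l Hl ->]; rewrite mem_iota.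
    have Hlx : l != x by apply: contraNneq HxU => <-.
    have := HmU l Hl; rewrite /gx.
    case: (ltnP l x) => Hl1; first lia.
    have Hl2 : x < l by rewrite ltn_neqAle eq_sym Hlx Hl1.
    lia.
  have Hsz0 : size (iota 1 n) <= size U0 by rewrite size_iota size_map HsU.
  have [_ Hi] := uniq_min_size Hun Hsub Hsz0.
  by apply: uniq_perm => //; apply: iota_uniq.
have Hsq0 : sqq c n U0.
  move=> j j0 Hj.
  have := Hsq j j0 (ltn_trans Hj (ltnSn n)).
  rewrite -cats1 takel_cat; last by rewrite HsU; lia.
  move=> Hjt.
  have HjU : j \in U by apply: mem_take Hjt.
  have Hjx : j < x.
    have Hjx : j != x by apply: contraNneq HxU => <-.
    rewrite ltn_neqAle Hjx /=; rewrite leqNgt; apply/negP => Hxj.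
    have : c * (x - 1) <= c * (j - 1) by apply: leq_mul => //; lia.
    move: H Hj; set A := c * (x - 1); set B := c * (j - 1); lia.
  rewrite /U0 -map_take.
  by apply/mapP; exists j => //; rewrite /gx Hjx.
have EA : EE c (rcons U x) (rcons (map (fx x) (iota 1 n)) x).
  have := @EE_map c (fx x) _ _ (fx_homo x) (IH U0 Hcn HU0 Hsq0); rewrite HfU => E.
  by rewrite -!cats1; exact: (@EE_ctx c [::] [:: x] _ _ E).
apply: rst_trans EA _.
have Ex1 : 0 < x by lia.
have Efin : iota 1 n.+1 = rcons (iota 1 n) n.+1.
  by have := iotaD 1 n 1; rewrite addn1 add1n -cats1.
case: (ltnP (n - c) (x - 1)) => HB.
  have ES : map (fx x) (iota 1 n) = iota 1 (x - 1) ++ iota x.+1 (n.+1 - x).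
    have Ei : forall N, N = n -> iota 1 N = iota 1 (x - 1) ++ iota x (n.+1 - x).
      move=> N EN; rewrite (_ : N = (x - 1) + (n.+1 - x)); last lia.
      by rewrite (@iota_app 1 (x - 1) _ x) //; lia.
    rewrite (Ei n erefl) map_cat map_fx_lo; last lia.
    by rewrite map_fx_hi.
  have [d' Hd'] : exists d', x - 1 = (n - c) + d'.+1 by exists (x - 1 - (n - c)).-1; lia.
  have L1 : rcons (iota 1 (x - 1) ++ iota x.+1 (n.+1 - x)) x =
      iota 1 (n - c) ++ (n - c).+1 :: (iota (n - c).+2 d' ++ iota x.+1 (n.+1 - x) ++ [:: x]) ++ [::].
    rewrite cats0 -cats1 Hd' (@iota_app 1 (n - c) d'.+1 (n - c).+1); last lia.
    by rewrite -!catA.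
  have L2 : iota 1 n.+1 = iota 1 (n - c) ++ (n - c).+1 :: iota (n - c).+2 c ++ [::].
    have Ei : forall N, N = n.+1 -> iota 1 N = iota 1 (n - c) ++ (n - c).+1 :: iota (n - c).+2 c.
      move=> N EN; rewrite (_ : N = (n - c) + c.+1); last lia.
      by rewrite (@iota_app 1 (n - c) _ (n - c).+1) //; lia.
    by rewrite cats0 (Ei _ erefl).
  have L3 : forall a, a = (n - c).+2 -> iota a c = iota a d' ++ x :: iota x.+1 (n.+1 - x).
    move=> a Ha; rewrite (_ : c = d' + (n.+1 - x).+1); last lia.
    by rewrite (@iota_app a d' _ x) //; lia.
  rewrite ES L1 L2; apply: win.
  - rewrite !size_cat !size_iota /=; lia.
  - by rewrite (L3 _ erefl) perm_cat2l cats1 perm_rcons.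
  - apply/allP => z; rewrite !mem_cat !mem_iota !inE => Hz; lia.
have Hc2 : 1 < c.
  case: (ltnP 1 c) => // Hc1; have Ec : c = 1 by lia.
  by move: H; rewrite Ec mul1n; lia.
have Hx2 : 1 < x.
  case: (ltnP 1 x) => // Hx1; have E0 : x - 1 = 0 by lia.
  by move: H; rewrite E0 muln0; lia.
set m := n.+2 - c - x.
set U0' := iota 1 (x - 2) ++ iota x m ++ (x - 1) :: iota (n.+2 - c) (c - 1).
set U' := iota 1 (x - 2) ++ iota x.+1 m ++ (x - 1) :: iota (n.+3 - c) (c - 1).
set U'' := iota 1 (x - 2) ++ iota x.+1 m ++ (x - 1) :: iota (n.+3 - c) (c - 2) ++ [:: x].
have HU0' : map (fx x) U0' = U'.
  rewrite /U0' /U' !map_cat map_fx_lo; last lia.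
  rewrite map_fx_hi // map_cons map_fx_hi; last lia.
  rewrite (_ : (n.+2 - c).+1 = n.+3 - c); last lia.
  rewrite {1}/fx ifT //; lia.
have Hp0 : is_perm n U0'.
  have Ei : forall N, N = n ->
      iota 1 N = iota 1 (x - 2) ++ (x - 1) :: iota x m ++ iota (n.+2 - c) (c - 1).
    move=> N EN; rewrite (_ : N = (x - 2) + (m + (c - 1)).+1); last by rewrite /m; lia.
    rewrite (@iota_app 1 (x - 2) _ (x - 1)); last lia.
    rewrite /= (_ : (x - 1).+1 = x); last lia.
    by rewrite (@iota_app x m _ (n.+2 - c)) //; rewrite /m; lia.
  rewrite /is_perm (Ei n erefl) /U0'; apply/permP => p; rewrite !count_cat /= !count_cat /= ?addn0; lia.
have Hq0 : sqq c n U0'.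
  apply: sq_help => //; first by rewrite size_iota /m; lia.
  by rewrite mem_iota; lia.
have Hp'' : is_perm n U''.
  have Ei : forall N, N = n ->
      iota 1 N = iota 1 (x - 2) ++ (x - 1) :: x :: iota x.+1 m ++ iota (n.+3 - c) (c - 2).
    move=> N EN; rewrite (_ : N = (x - 2) + (m + (c - 2)).+2); last by rewrite /m; lia.
    rewrite (@iota_app 1 (x - 2) _ (x - 1)); last lia.
    rewrite /= (_ : (x - 1).+1 = x); last lia.
    by rewrite (@iota_app x.+1 m _ (n.+3 - c)) //; rewrite /m; lia.
  rewrite /is_perm (Ei n erefl) /U''; apply/permP => p; rewrite !count_cat /= !count_cat /= ?addn0; lia.
have Hq'' : sqq c n U''.
  apply: sq_help => //; first by rewrite size_iota /m; lia.
  by rewrite mem_iota; lia.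
apply: (@rst_trans _ _ _ (rcons U' x)).
  apply: rst_sym; rewrite -!cats1 -HU0'.
  exact: (@EE_ctx c [::] [:: x] _ _ (@EE_map c (fx x) _ _ (fx_homo x) (IH U0' Hcn Hp0 Hq0))).
apply: (@rst_trans _ _ _ (rcons U'' n.+1)); last first.
  rewrite Efin -!cats1; exact: (@EE_ctx c [::] [:: n.+1] _ _ (IH U'' Hcn Hp'' Hq'')).
have L1 : forall K, K = c - 1 -> iota (n.+3 - c) K = iota (n.+3 - c) (c - 2) ++ [:: n.+1].
  move=> K EK; rewrite (_ : K = (c - 2) + 1); last lia.
  by rewrite (@iota_app _ (c - 2) 1 n.+1) //; lia.
rewrite /U' /U'' (L1 _ erefl) -!cats1.
rewrite -!catA /=.
have W := @win c (iota 1 (x - 2) ++ iota x.+1 m) [::] (x - 1)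
  (iota (n.+3 - c) (c - 2) ++ [:: n.+1; x]) (iota (n.+3 - c) (c - 2) ++ [:: x; n.+1]).
rewrite !cats0 -!catA /= in W.
rewrite -(catA (iota (n.+3 - c) (c - 2)) [:: n.+1] [:: x]).
rewrite -(catA (iota (n.+3 - c) (c - 2)) [:: x] [:: n.+1]) /=.
apply: W.
- rewrite size_cat size_iota /=; lia.
- by rewrite perm_cat2l; apply/permP => p /=; lia.
- apply/allP => z; rewrite !mem_cat !mem_iota !inE => Hz; lia.
Qed.

Theorem lemma3p2 (c k n : nat) :
  1 <= c -> 1 <= k -> c.+1 <= n <= c * k + 1 ->
  forall w : seq nat, is_perm n w -> squished c k w ->
  repl_equiv c n w (iota 1 n).
Proof.
move=> c0 k0 /andP[Hn1 Hn2] w Hw Hsq.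
apply: (@EE_repl n c w (iota 1 n) _ Hw); apply: (@main c c0 n w) => //.
move=> j j0 Hj; apply: Hsq; rewrite j0 /=.
rewrite leqNgt; apply/negP => Hkj.
have : c * k <= c * (j - 1) by apply: leq_mul => //; lia.
move: Hj Hn2; set A := c * k; set B := c * (j - 1); lia.
Qed.
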